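(* Fix $I_{ij},I_{jk},I_{ki}\in[0,\infty)$. Let $\mathcal{U}_E^{ijk}$ be the set of $(u_i,u_j,u_k)\in\mathbb{R}^3$ such that $(e^{u_i},e^{u_j},e^{u_k})\in\mathcal{R}_E^{ijk}$. Then $\mathcal{U}_E^{ijk}$ is a connected and simply connected open subset of $\mathbb{R}^3$.
   Context: The set $\mathcal{R}_E^{ijk}$ consists of those $(r_i,r_j,r_k)\in\mathbb{R}^3_{>0}$ for which $$l_{ij}=\sqrt{r_i^2+r_j^2+2I_{ij}r_ir_j},\quad l_{jk}=\sqrt{r_j^2+r_k^2+2I_{jk}r_jr_k},\quad l_{ki}=\sqrt{r_k^2+r_i^2+2I_{ki}r_kr_i}$$ satisfy the strict triangle inequalities. *)

(* Defs.v *)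
From Stdlib Require Import Reals.
Open Scope R_scope.

Definition pt3 : Type := (R * R * R)%type.

Definition dist3 (p q : pt3) : R :=
  let '(x1, y1, z1) := p in let '(x2, y2, z2) := q in
  sqrt ((x1 - x2) ^ 2 + (y1 - y2) ^ 2 + (z1 - z2) ^ 2).

Definition open3 (U : pt3 -> Prop) : Prop :=
  forall p, U p -> exists eps, 0 < eps /\ forall q, dist3 p q < eps -> U q.

Definition connected3 (U : pt3 -> Prop) : Prop :=
  ~ (exists A B : pt3 -> Prop,
        open3 A /\ open3 B /\
        (forall p, U p -> A p \/ B p) /\
        (exists p, U p /\ A p) /\ (exists p, U p /\ B p) /\
        (forall p, U p -> A p -> B p -> False)).

Definition I01 (t : R) : Prop := 0 <= t <= 1.

Definition path_cont (g : R -> pt3) : Prop :=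
  forall t, I01 t -> forall eps, 0 < eps -> exists delta, 0 < delta /\
    forall t', I01 t' -> Rabs (t - t') < delta -> dist3 (g t) (g t') < eps.

Definition square_cont (H : R -> R -> pt3) : Prop :=
  forall s t, I01 s -> I01 t -> forall eps, 0 < eps -> exists delta, 0 < delta /\
    forall s' t', I01 s' -> I01 t' ->
      sqrt ((s - s') ^ 2 + (t - t') ^ 2) < delta ->
      dist3 (H s t) (H s' t') < eps.

Definition path_connected3 (U : pt3 -> Prop) : Prop :=
  forall p q, U p -> U q -> exists g : R -> pt3,
    path_cont g /\ (forall t, I01 t -> U (g t)) /\ g 0 = p /\ g 1 = q.

Definition simply_connected3 (U : pt3 -> Prop) : Prop :=
  path_connected3 U /\
  forall g : R -> pt3,
    path_cont g -> (forall t, I01 t -> U (g t)) -> g 0 = g 1 ->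
    exists H : R -> R -> pt3,
      square_cont H /\
      (forall s t, I01 s -> I01 t -> U (H s t)) /\
      (forall t, I01 t -> H 0 t = g t) /\
      (forall t, I01 t -> H 1 t = g 0) /\
      (forall s, I01 s -> H s 0 = g 0 /\ H s 1 = g 0).

Definition edge_len (Iab ra rb : R) : R :=
  sqrt (ra ^ 2 + rb ^ 2 + 2 * Iab * ra * rb).

Definition R_E (Iij Ijk Iki : R) (r : pt3) : Prop :=
  let '(ri, rj, rk) := r in
  0 < ri /\ 0 < rj /\ 0 < rk /\
  let lij := edge_len Iij ri rj in
  let ljk := edge_len Ijk rj rk in
  let lki := edge_len Iki rk ri in
  lij < ljk + lki /\ ljk < lki + lij /\ lki < lij + ljk.

Definition U_E (Iij Ijk Iki : R) (u : pt3) : Prop :=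
  let '(ui, uj, uk) := u in R_E Iij Ijk Iki (exp ui, exp uj, exp uk).

(* Main.v *)
Require Import Defs.
From Stdlib Require Import Reals Lra Psatz Classical.
Open Scope R_scope.

Definition Qf (I x y : R) := x^2 + y^2 + 2*I*x*y.
Definition Nf (I x y : R) := sqrt (Qf I x y).
Definition T0 (I1 I2 I3 a b c : R) := c * Nf I1 a b < a * Nf I2 b c + b * Nf I3 c a.
Definition Kset (I1 I2 I3 a b c : R) :=
  0 < a /\ 0 < b /\ 0 < c /\ T0 I1 I2 I3 a b c /\ T0 I2 I3 I1 b c a /\ T0 I3 I1 I2 c a b.
Definition qf (I1 I2 I3 a b c : R) :=
  (1 - I2^2)*a^2 + (1-I3^2)*b^2 + (1-I1^2)*c^2
  + 2*((I1+I2*I3)*a*b + (I2+I1*I3)*b*c + (I3+I1*I2)*c*a).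
Definition Dd (I1 I2 I3 : R) := I1^2+I2^2+I3^2+2*I1*I2*I3-1.

Lemma Qf_pos I x y : 0 <= I -> 0 < x -> 0 <= y -> y^2 < Qf I x y.
Proof. intros; unfold Qf. assert (0 <= I*x*y) by (repeat apply Rmult_le_pos; lra). nra. Qed.

Lemma Qf_nonneg I x y : 0 <= I -> 0 <= x -> 0 <= y -> 0 <= Qf I x y.
Proof. intros; unfold Qf. assert (0 <= I*x*y) by (repeat apply Rmult_le_pos; lra). nra. Qed.

Lemma Nf_sq I x y : 0 <= I -> 0 <= x -> 0 <= y -> Nf I x y * Nf I x y = Qf I x y.
Proof. intros; unfold Nf; apply sqrt_sqrt; apply Qf_nonneg; auto. Qed.

Lemma Nf_nonneg I x y : 0 <= Nf I x y.
Proof. apply sqrt_pos. Qed.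

Lemma Nf_gt I x y : 0 <= I -> 0 < x -> 0 <= y -> y < Nf I x y.
Proof. intros. pose proof (Nf_sq I x y H ltac:(lra) H1). pose proof (Qf_pos I x y H H0 H1).
  pose proof (Nf_nonneg I x y). nra. Qed.

Lemma Nf_gt' I x y : 0 <= I -> 0 <= x -> 0 < y -> x < Nf I x y.
Proof. intros. pose proof (Nf_sq I x y H H0 ltac:(lra)). assert (x^2 < Qf I x y) by (unfold Qf; assert (0 <= I*x*y) by (repeat apply Rmult_le_pos; lra); nra).
  pose proof (Nf_nonneg I x y). nra. Qed.

Lemma Nf_le I x y : 0 <= I <= 1 -> 0 <= x -> 0 <= y -> Nf I x y <= x + y.
Proof. intros. pose proof (Nf_sq I x y ltac:(lra) H0 H1). pose proof (Nf_nonneg I x y).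
  assert (Qf I x y <= (x+y)^2) by (unfold Qf; assert (I*x*y <= x*y) by (assert (0<=x*y) by nra; nra); nra). nra. Qed.

Lemma T0_small I1 I2 I3 a b c : 0 <= I1 <= 1 -> 0 <= I2 -> 0 <= I3 ->
  0 < a -> 0 < b -> 0 < c -> T0 I1 I2 I3 a b c.
Proof. intros. unfold T0.
  pose proof (Nf_le I1 a b H ltac:(lra) ltac:(lra)).
  pose proof (Nf_gt I2 b c H0 H3 ltac:(lra)).
  pose proof (Nf_gt' I3 c a H1 ltac:(lra) H2).
  assert (c * Nf I1 a b <= c*(a+b)) by (apply Rmult_le_compat_l; lra).
  assert (a*c < a * Nf I2 b c) by (apply Rmult_lt_compat_l; lra).
  assert (b*c < b * Nf I3 c a) by (apply Rmult_lt_compat_l; lra). nra. Qed.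

Lemma qpos I1 I2 I3 a b c : 0 <= I1 -> 0 <= I2 -> 0 <= I3 ->
  Kset I1 I2 I3 a b c -> 0 < qf I1 I2 I3 a b c.
Proof. intros h1 h2 h3 [ha [hb [hc [t0 [t1 t2]]]]]. unfold T0 in *.
  set (n1 := Nf I1 a b) in *. set (n2 := Nf I2 b c) in *. set (n3 := Nf I3 c a) in *.
  assert (e1 : n1*n1 = Qf I1 a b) by (apply Nf_sq; lra).
  assert (e2 : n2*n2 = Qf I2 b c) by (apply Nf_sq; lra).
  assert (e3 : n3*n3 = Qf I3 c a) by (apply Nf_sq; lra).
  assert (p1 : 0 <= n1) by apply Nf_nonneg. assert (p2 : 0 <= n2) by apply Nf_nonneg.
  assert (p3 : 0 <= n3) by apply Nf_nonneg.
  assert (X : ((c*n1)^2 - (a*n2+b*n3)^2) * ((c*n1)^2 - (a*n2-b*n3)^2) < 0).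
  { apply Rmult_neg_pos.
    - assert (0 <= c*n1) by nra. nra.
    - assert (0 < (c*n1 - (a*n2 - b*n3)) * (c*n1 + (a*n2 - b*n3))) by (apply Rmult_lt_0_compat; lra).
      nra. }
  assert (Id : ((c*n1)^2 - (a*n2+b*n3)^2) * ((c*n1)^2 - (a*n2-b*n3)^2)
     = (c^2*(n1*n1) - a^2*(n2*n2) - b^2*(n3*n3))^2 - 4*a^2*b^2*(n2*n2)*(n3*n3)) by ring.
  rewrite Id, e1, e2, e3 in X.
  assert (Id2 : (c ^ 2 * Qf I1 a b - a ^ 2 * Qf I2 b c - b ^ 2 * Qf I3 c a) ^ 2 -
     4 * a ^ 2 * b ^ 2 * Qf I2 b c * Qf I3 c a = - 4*a^2*b^2*c^2 * qf I1 I2 I3 a b c)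
    by (unfold Qf, qf; ring).
  rewrite Id2 in X.
  assert (0 < a*b*c) by (repeat apply Rmult_lt_0_compat; lra).
  assert (0 < (a*b*c)^2) by (apply pow_lt; lra).
  replace (- 4 * a ^ 2 * b ^ 2 * c ^ 2 * qf I1 I2 I3 a b c) with (-4 * ((a*b*c)^2 * qf I1 I2 I3 a b c)) in X by ring.
  destruct (Rle_or_lt (qf I1 I2 I3 a b c) 0) as [Hq|Hq]; [|exact Hq].
  assert ((a*b*c)^2 * qf I1 I2 I3 a b c <= 0) by (apply Rmult_le_0_r ; lra) || nra. lra.
Qed.

Definition E0f (I1 I2 I3 a b c : R) := I1*c^2 - a*b - I2*a*c - I3*b*c.
Definition betaf (I1 I2 I3 a b : R) := (I2+I1*I3)*b + (I3+I1*I2)*a.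

Lemma Id_W I1 I2 I3 a b c :
  c^2 * Qf I1 a b - a^2 * Qf I2 b c - b^2 * Qf I3 c a = 2*a*b*E0f I1 I2 I3 a b c.
Proof. unfold Qf, E0f; ring. Qed.
Lemma Id_PQ I1 I2 I3 a b c :
  Qf I2 b c * Qf I3 c a - (E0f I1 I2 I3 a b c)^2 = c^2 * qf I1 I2 I3 a b c.
Proof. unfold Qf, E0f, qf; ring. Qed.
Lemma Id_D I1 I2 I3 a b c :
  (1 - I1^2) * qf I1 I2 I3 a b c = ((1-I1^2)*c + betaf I1 I2 I3 a b)^2 - Dd I1 I2 I3 * Qf I1 a b.
Proof. unfold Qf, qf, Dd, betaf; ring. Qed.

Lemma sq_T0 I1 I2 I3 a b c : 0 <= I1 -> 0 <= I2 -> 0 <= I3 -> 0 < a -> 0 < b -> 0 < c ->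
  E0f I1 I2 I3 a b c < Nf I2 b c * Nf I3 c a -> T0 I1 I2 I3 a b c.
Proof. intros h1 h2 h3 ha hb hc H. unfold T0.
  set (n1 := Nf I1 a b) in *. set (n2 := Nf I2 b c) in *. set (n3 := Nf I3 c a) in *.
  assert (e1 : n1*n1 = Qf I1 a b) by (apply Nf_sq; lra).
  assert (e2 : n2*n2 = Qf I2 b c) by (apply Nf_sq; lra).
  assert (e3 : n3*n3 = Qf I3 c a) by (apply Nf_sq; lra).
  assert (p1 : 0 <= n1) by apply Nf_nonneg. assert (p2 : 0 <= n2) by apply Nf_nonneg.
  assert (p3 : 0 <= n3) by apply Nf_nonneg.
  pose proof (Id_W I1 I2 I3 a b c) as W. rewrite <- e1, <- e2, <- e3 in W.
  assert (0 < a*b) by nra.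
  assert ((c*n1)^2 < (a*n2+b*n3)^2).
  { assert (2*a*b*E0f I1 I2 I3 a b c < 2*a*b*(n2*n3)) by (apply Rmult_lt_compat_l; lra). nra. }
  assert (0 <= a*n2 + b*n3) by nra.
  assert (0 <= c*n1) by nra. nra.
Qed.

Lemma T0_sq I1 I2 I3 a b c : 0 <= I1 -> 0 <= I2 -> 0 <= I3 -> 0 < a -> 0 < b -> 0 < c ->
  0 < qf I1 I2 I3 a b c -> T0 I1 I2 I3 a b c.
Proof. intros h1 h2 h3 ha hb hc H. apply sq_T0; auto.
  pose proof (Id_PQ I1 I2 I3 a b c).
  assert (e2 : Nf I2 b c*Nf I2 b c = Qf I2 b c) by (apply Nf_sq; lra).
  assert (e3 : Nf I3 c a*Nf I3 c a = Qf I3 c a) by (apply Nf_sq; lra).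
  pose proof (Nf_nonneg I2 b c). pose proof (Nf_nonneg I3 c a).
  assert (0 < c^2 * qf I1 I2 I3 a b c) by (apply Rmult_lt_0_compat; nra).
  set (P := Nf I2 b c * Nf I3 c a) in *.
  assert (P*P = Qf I2 b c * Qf I3 c a) by (unfold P; rewrite <- e2, <- e3; ring).
  assert (0 <= P) by (unfold P; nra).
  set (E := E0f I1 I2 I3 a b c) in *. nra.
Qed.

Lemma E0_neg_left I1 I2 I3 a b c : 1 < I1 -> 0 <= I2 -> 0 <= I3 -> 0 < a -> 0 < b -> 0 < c ->
  0 < Dd I1 I2 I3 ->
  (I1^2-1)*c <= betaf I1 I2 I3 a b - sqrt (Dd I1 I2 I3 * Qf I1 a b) ->
  E0f I1 I2 I3 a b c < 0.
Proof. intros h1 h2 h3 ha hb hc hD H.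
  assert (hI : 0 < I1^2 - 1) by nra.
  destruct (Rlt_or_le (E0f I1 I2 I3 a b c) 0) as [|HE]; [assumption|exfalso].
  set (w := I2*a + I3*b).
  assert (hw : 0 <= w) by (unfold w; nra).
  set (dsc := w^2 + 4*I1*a*b).
  assert (hdsc : w^2 < dsc) by (unfold dsc; assert (0 < I1*a*b) by (repeat apply Rmult_lt_0_compat; lra); lra).
  set (r := sqrt dsc).
  assert (er : r*r = dsc) by (apply sqrt_sqrt; nra).
  assert (hr : 0 <= r) by apply sqrt_pos.
  assert (hrw : w < r) by nra.
  set (ce := (w + r)/(2*I1)).
  assert (hce : 0 < ce) by (unfold ce; apply Rdiv_lt_0_compat; lra).
  assert (Ece : E0f I1 I2 I3 a b ce = 0).
  { unfold E0f, ce. field_simplify; [|lra]. unfold w in *. 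
    replace (r^2) with dsc by (simpl; lra). unfold dsc, w. field; lra. }
  assert (hfac : E0f I1 I2 I3 a b c = I1 * (c - ce) * (c - (w - r)/(2*I1))).
  { unfold E0f, ce. field_simplify; [|lra]. 
    replace (r^2) with dsc by (simpl; lra). unfold dsc, w. field; lra. }
  assert (hpos : 0 < c - (w - r)/(2*I1)).
  { assert ((w - r)/(2*I1) < 0) by (apply Rdiv_neg_pos; lra). lra. }
  assert (hcc : ce <= c).
  { rewrite hfac in HE. destruct (Rle_or_lt ce c); auto.
    assert (I1 * (c - ce) < 0) by nra. nra. }
  set (s := sqrt (Dd I1 I2 I3 * Qf I1 a b)) in *.
  assert (hs : 0 <= s) by apply sqrt_pos.
  assert (es : s*s = Dd I1 I2 I3 * Qf I1 a b).
  { apply sqrt_sqrt. pose proof (Qf_nonneg I1 a b ltac:(lra) ltac:(lra) ltac:(lra)). nra. }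
  assert (hl : s <= (1 - I1^2)*ce + betaf I1 I2 I3 a b).
  { assert ((I1^2-1)*ce <= (I1^2-1)*c) by (apply Rmult_le_compat_l; lra).
    replace ((1 - I1^2)*ce) with (-((I1^2-1)*ce)) by ring. lra. }
  pose proof (Id_D I1 I2 I3 a b ce) as ID.
  assert (qle : qf I1 I2 I3 a b ce <= 0).
  { assert ((1 - I1^2) * qf I1 I2 I3 a b ce >= 0) by (rewrite ID; nra).
    destruct (Rle_or_lt (qf I1 I2 I3 a b ce) 0); auto. nra. }
  pose proof (Id_PQ I1 I2 I3 a b ce) as PQ. rewrite Ece in PQ.
  assert (0 < Qf I2 b ce) by (pose proof (Qf_pos I2 b ce h2 hb ltac:(lra)); nra).
  assert (0 < Qf I3 ce a) by (pose proof (Qf_pos I3 ce a h3 hce ltac:(lra)); nra).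
  assert (0 < Qf I2 b ce * Qf I3 ce a) by (apply Rmult_lt_0_compat; lra).
  assert (ce^2 * qf I1 I2 I3 a b ce <= 0) by (rewrite <- (Rmult_0_r (ce^2)); apply Rmult_le_compat_l; nra).
  nra.
Qed.

Lemma T0_char I1 I2 I3 a b c : 1 < I1 -> 0 <= I2 -> 0 <= I3 -> 0 < a -> 0 < b -> 0 < c ->
  0 < Dd I1 I2 I3 ->
  (T0 I1 I2 I3 a b c <->
   (I1^2-1)*c < betaf I1 I2 I3 a b + sqrt (Dd I1 I2 I3 * Qf I1 a b)).
Proof. intros h1 h2 h3 ha hb hc hD.
  assert (hI : 0 < I1^2 - 1) by nra.
  pose proof (Qf_pos I1 a b ltac:(lra) ha ltac:(lra)) as hQ.
  assert (hQ' : 0 < Qf I1 a b) by nra.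
  set (s := sqrt (Dd I1 I2 I3 * Qf I1 a b)).
  assert (hs : 0 < s) by (apply sqrt_lt_R0; apply Rmult_lt_0_compat; lra).
  assert (es : s*s = Dd I1 I2 I3 * Qf I1 a b) by (apply sqrt_sqrt; nra).
  pose proof (Id_D I1 I2 I3 a b c) as ID.
  set (bt := betaf I1 I2 I3 a b) in *.
  set (q := qf I1 I2 I3 a b c) in *.
  split.
  - intro HT. destruct (Rlt_or_le ((I1^2-1)*c) (bt + s)) as [|Hc]; [assumption|exfalso].
    assert (hx : (1-I1^2)*c + bt <= - s) by (replace ((1 - I1^2)*c) with (-((I1^2-1)*c)) by ring; lra).
    assert (hq : q <= 0).
    { assert ((1 - I1^2) * q >= 0) by (rewrite ID; nra).
      destruct (Rle_or_lt q 0); auto. assert ((1-I1^2)*q < 0) by (apply Rmult_neg_pos; lra). lra. }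
    assert (hb0 : bt < (I1^2-1)*c) by lra.
    assert (E1 : E0f I2 I3 I1 b c a < 0).
    { assert (k1 : (b + I1*a)*bt < (b+I1*a)*((I1^2-1)*c)) by (apply Rmult_lt_compat_l; nra).
      assert (k2 : (I1^2-1)*(I2*a^2 - I3*a*b) <= (b + I1*a)*bt).
      { unfold bt, betaf. assert (0 <= I1*I3*a*a) by (repeat apply Rmult_le_pos; lra).
        assert (0 <= I2*a*a) by (repeat apply Rmult_le_pos; lra).
        assert (0 <= I1*I2*a*b) by (repeat apply Rmult_le_pos; lra).
        assert (0 <= I1*I1*I3*a*b) by (repeat apply Rmult_le_pos; lra).
        assert (0 <= I2*b*b) by (repeat apply Rmult_le_pos; lra).
        assert (0 <= I1*I3*b*b) by (repeat apply Rmult_le_pos; lra). nra. }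
      assert (k3 : (I1^2-1)*(I2*a^2 - I3*a*b) < (I1^2-1)*((b+I1*a)*c)) by nra.
      assert (k4 : I2*a^2 - I3*a*b < (b+I1*a)*c).
      { apply (Rmult_lt_reg_l (I1^2-1)); lra. }
      unfold E0f. nra. }
    assert (E2 : E0f I3 I1 I2 c a b < 0).
    { assert (k1 : (a + I1*b)*bt < (a+I1*b)*((I1^2-1)*c)) by (apply Rmult_lt_compat_l; nra).
      assert (k2 : (I1^2-1)*(I3*b^2 - I2*a*b) <= (a + I1*b)*bt).
      { unfold bt, betaf. assert (0 <= I1*I2*b*b) by (repeat apply Rmult_le_pos; lra).
        assert (0 <= I3*b*b) by (repeat apply Rmult_le_pos; lra).
        assert (0 <= I1*I3*a*b) by (repeat apply Rmult_le_pos; lra).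
        assert (0 <= I1*I1*I2*a*b) by (repeat apply Rmult_le_pos; lra).
        assert (0 <= I3*a*a) by (repeat apply Rmult_le_pos; lra).
        assert (0 <= I1*I2*a*a) by (repeat apply Rmult_le_pos; lra). nra. }
      assert (k3 : (I1^2-1)*(I3*b^2 - I2*a*b) < (I1^2-1)*((a+I1*b)*c)) by nra.
      assert (k4 : I3*b^2 - I2*a*b < (a+I1*b)*c).
      { apply (Rmult_lt_reg_l (I1^2-1)); lra. }
      unfold E0f. nra. }
    assert (T1 : T0 I2 I3 I1 b c a).
    { apply sq_T0; try lra. pose proof (Nf_nonneg I3 c a). pose proof (Nf_nonneg I1 a b). nra. }
    assert (T2 : T0 I3 I1 I2 c a b).
    { apply sq_T0; try lra. pose proof (Nf_nonneg I1 a b). pose proof (Nf_nonneg I2 b c). nra. }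
    assert (hK : Kset I1 I2 I3 a b c) by (repeat split; auto).
    pose proof (qpos I1 I2 I3 a b c ltac:(lra) h2 h3 hK). unfold q in hq. lra.
  - intro Hc. destruct (Rlt_or_le (bt - s) ((I1^2-1)*c)) as [Hl|Hl].
    + apply T0_sq; try lra.
      assert (hx1 : (1-I1^2)*c + bt < s) by (replace ((1 - I1^2)*c) with (-((I1^2-1)*c)) by ring; lra).
      assert (hx2 : -s < (1-I1^2)*c + bt) by (replace ((1 - I1^2)*c) with (-((I1^2-1)*c)) by ring; lra).
      assert (((1-I1^2)*c + bt)^2 < s*s) by nra.
      assert ((1 - I1^2) * q < 0) by (rewrite ID; nra).
      fold q. destruct (Rle_or_lt q 0) as [h|h]; auto.
      assert (0 <= (1-I1^2)*q) by (apply Rmult_le_0_lt_compat || nra). lra.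
    + apply sq_T0; try lra.
      pose proof (E0_neg_left I1 I2 I3 a b c h1 h2 h3 ha hb hc hD Hl).
      pose proof (Nf_nonneg I2 b c). pose proof (Nf_nonneg I3 c a). nra.
Qed.

Lemma conc_s I1 Dv a b a' b' t : 1 < I1 -> 0 < Dv -> 0 < a -> 0 < b -> 0 < a' -> 0 < b' -> 0 <= t <= 1 ->
  (1-t) * sqrt (Dv * Qf I1 a b) + t * sqrt (Dv * Qf I1 a' b')
  <= sqrt (Dv * Qf I1 ((1-t)*a + t*a') ((1-t)*b + t*b')).
Proof. intros h1 hD ha hb ha' hb' ht.
  pose proof (Qf_nonneg I1 a b ltac:(lra) ltac:(lra) ltac:(lra)) as q1.
  pose proof (Qf_nonneg I1 a' b' ltac:(lra) ltac:(lra) ltac:(lra)) as q2.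
  set (s := sqrt (Dv * Qf I1 a b)). set (s' := sqrt (Dv * Qf I1 a' b')).
  assert (es : s*s = Dv * Qf I1 a b) by (apply sqrt_sqrt; nra).
  assert (es' : s'*s' = Dv * Qf I1 a' b') by (apply sqrt_sqrt; nra).
  assert (hs : 0 <= s) by apply sqrt_pos. assert (hs' : 0 <= s') by apply sqrt_pos.
  set (Bx := a*a' + b*b' + I1*(a*b' + a'*b)).
  assert (hB : 0 <= Bx).
  { unfold Bx. assert (0 <= a*a') by (apply Rmult_le_pos; lra).
    assert (0 <= b*b') by (apply Rmult_le_pos; lra).
    assert (0 <= a*b') by (apply Rmult_le_pos; lra).
    assert (0 <= a'*b) by (apply Rmult_le_pos; lra).
    assert (0 <= I1*(a*b' + a'*b)) by (apply Rmult_le_pos; lra). lra. }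
  assert (idB : Bx*Bx - Qf I1 a b * Qf I1 a' b' = (I1^2-1)*(a*b'-a'*b)^2) by (unfold Bx, Qf; ring).
  assert (hBB : Qf I1 a b * Qf I1 a' b' <= Bx*Bx) by (assert (0 <= (I1^2-1)*(a*b'-a'*b)^2) by (apply Rmult_le_pos; [nra | apply pow2_ge_0]); lra).
  assert (hss : s*s' <= Dv*Bx).
  { assert ((s*s')*(s*s') <= (Dv*Bx)*(Dv*Bx)).
    { replace ((s*s')*(s*s')) with ((s*s)*(s'*s')) by ring. rewrite es, es'.
      replace (Dv * Qf I1 a b * (Dv * Qf I1 a' b')) with ((Dv*Dv)*(Qf I1 a b * Qf I1 a' b')) by ring.
      replace ((Dv*Bx)*(Dv*Bx)) with ((Dv*Dv)*(Bx*Bx)) by ring.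
      apply Rmult_le_compat_l; nra. }
    assert (0 <= Dv*Bx) by nra. assert (0 <= s*s') by nra. nra. }
  assert (idQ : Qf I1 ((1-t)*a + t*a') ((1-t)*b + t*b') =
      (1-t)^2 * Qf I1 a b + t^2 * Qf I1 a' b' + 2*t*(1-t)*Bx) by (unfold Qf, Bx; ring).
  set (m := (1-t)*s + t*s').
  assert (hm : 0 <= m) by (unfold m; nra).
  assert (hmm : m*m <= Dv * Qf I1 ((1-t)*a + t*a') ((1-t)*b + t*b')).
  { rewrite idQ. unfold m.
    assert (0 <= 2*t*(1-t)) by nra.
    assert (2*t*(1-t)*(s*s') <= 2*t*(1-t)*(Dv*Bx)) by (apply Rmult_le_compat_l; lra).
    replace (((1 - t) * s + t * s') * ((1 - t) * s + t * s')) with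
      ((1-t)^2*(s*s) + t^2*(s'*s') + 2*t*(1-t)*(s*s')) by ring.
    rewrite es, es'. nra. }
  rewrite <- (sqrt_square m hm). apply sqrt_le_1_alt. exact hmm.
Qed.

Lemma Dpos I1 I2 I3 a b c : 1 < I1 -> 0 <= I2 -> 0 <= I3 -> 0 < a -> 0 < b -> 0 < c ->
  0 < qf I1 I2 I3 a b c -> 0 < Dd I1 I2 I3.
Proof. intros h1 h2 h3 ha hb hc hq.
  pose proof (Id_D I1 I2 I3 a b c) as ID.
  assert (hI : 0 < I1^2 - 1) by nra.
  assert ((1-I1^2)*qf I1 I2 I3 a b c < 0) by (apply Rmult_neg_pos; lra).
  pose proof (Qf_pos I1 a b ltac:(lra) ha ltac:(lra)).
  rewrite ID in H.
  pose proof (pow2_ge_0 ((1 - I1 ^ 2) * c + betaf I1 I2 I3 a b)).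
  assert (0 < Dd I1 I2 I3 * Qf I1 a b) by lra.
  destruct (Rle_or_lt (Dd I1 I2 I3) 0); auto.
  assert (0 < Qf I1 a b) by (pose proof (pow2_ge_0 b); lra).
  assert (Dd I1 I2 I3 * Qf I1 a b <= 0 * Qf I1 a b) by (apply Rmult_le_compat_r; lra). lra.
Qed.

Lemma conv_T0 I1 I2 I3 a b c a' b' c' t : 0 <= I1 -> 0 <= I2 -> 0 <= I3 ->
  Kset I1 I2 I3 a b c -> Kset I1 I2 I3 a' b' c' -> 0 <= t <= 1 ->
  T0 I1 I2 I3 ((1-t)*a + t*a') ((1-t)*b + t*b') ((1-t)*c + t*c').
Proof. intros h1 h2 h3 K1 K2 ht.
  pose proof (qpos _ _ _ _ _ _ h1 h2 h3 K1) as hq.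
  destruct K1 as [ha [hb [hc [T _]]]]. destruct K2 as [ha' [hb' [hc' [T' _]]]].
  assert (pa : 0 < (1-t)*a + t*a') by nra.
  assert (pb : 0 < (1-t)*b + t*b') by nra.
  assert (pc : 0 < (1-t)*c + t*c') by nra.
  destruct (Rle_or_lt I1 1) as [hI|hI].
  - apply T0_small; lra.
  - pose proof (Dpos I1 I2 I3 a b c hI h2 h3 ha hb hc hq) as hD.
    apply (T0_char I1 I2 I3 a b c hI h2 h3 ha hb hc hD) in T.
    apply (T0_char I1 I2 I3 a' b' c' hI h2 h3 ha' hb' hc' hD) in T'.
    apply (T0_char I1 I2 I3 _ _ _ hI h2 h3 pa pb pc hD).
    pose proof (conc_s I1 (Dd I1 I2 I3) a b a' b' t hI hD ha hb ha' hb' ht) as CS.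
    assert (eb : betaf I1 I2 I3 ((1-t)*a + t*a') ((1-t)*b + t*b') =
       (1-t)*betaf I1 I2 I3 a b + t*betaf I1 I2 I3 a' b') by (unfold betaf; ring).
    rewrite eb.
    set (s := sqrt (Dd I1 I2 I3 * Qf I1 a b)) in *.
    set (s' := sqrt (Dd I1 I2 I3 * Qf I1 a' b')) in *.
    set (S := sqrt _) in CS |- *.
    set (X := betaf I1 I2 I3 a b) in *. set (Y := betaf I1 I2 I3 a' b') in *.
    assert (hI2 : 0 < I1^2 - 1) by nra.
    set (k := I1^2 - 1) in *.
    replace (k * ((1-t)*c + t*c')) with ((1-t)*(k*c) + t*(k*c')) by ring.
    destruct (Rle_or_lt t 0).
    + assert (t = 0) by lra. subst t. lra.
    + assert ((1-t)*(k*c) <= (1-t)*(X+s)) by (apply Rmult_le_compat_l; lra).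
      assert (t*(k*c') < t*(Y+s')) by (apply Rmult_lt_compat_l; lra). lra.
Qed.

Definition cts {X : Type} (d : X -> X -> R) (D : X -> Prop) (f : X -> R) : Prop :=
  forall x, D x -> forall eps, 0 < eps -> exists delta, 0 < delta /\
    forall y, D y -> d x y < delta -> Rabs (f x - f y) < eps.

Definition rcts (P : R -> Prop) (h : R -> R) : Prop :=
  forall y, P y -> forall eps, 0 < eps -> exists delta, 0 < delta /\
    forall y', P y' -> Rabs (y - y') < delta -> Rabs (h y - h y') < eps.

Lemma cts_const {X} d D (c : R) : @cts X d D (fun _ => c).
Proof. intros x _ eps he. exists 1. split; [lra|]. intros. rewrite Rminus_diag, Rabs_R0. lra. Qed.

Lemma cts_plus {X} d D (f g : X -> R) : cts d D f -> cts d D g -> cts d D (fun x => f x + g x).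
Proof. intros Hf Hg x Dx eps he.
  destruct (Hf x Dx (eps/2) ltac:(lra)) as [d1 [hd1 H1]].
  destruct (Hg x Dx (eps/2) ltac:(lra)) as [d2 [hd2 H2]].
  exists (Rmin d1 d2). split; [apply Rmin_pos; lra|]. intros y Dy hy.
  pose proof (Rmin_l d1 d2). pose proof (Rmin_r d1 d2).
  specialize (H1 y Dy ltac:(lra)). specialize (H2 y Dy ltac:(lra)).
  replace (f x + g x - (f y + g y)) with ((f x - f y) + (g x - g y)) by ring.
  pose proof (Rabs_triang (f x - f y) (g x - g y)). lra.
Qed.

Lemma cts_opp {X} d D (f : X -> R) : cts d D f -> cts d D (fun x => - f x).
Proof. intros Hf x Dx eps he. destruct (Hf x Dx eps he) as [d1 [hd1 H1]].
  exists d1. split; auto. intros y Dy hy. replace (- f x - - f y) with (-(f x - f y)) by ring.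
  rewrite Rabs_Ropp. auto. Qed.

Lemma cts_mult {X} d D (f g : X -> R) : cts d D f -> cts d D g -> cts d D (fun x => f x * g x).
Proof. intros Hf Hg x Dx eps he.
  set (M := Rabs (f x) + Rabs (g x) + 1).
  assert (hM : 1 <= M) by (unfold M; pose proof (Rabs_pos (f x)); pose proof (Rabs_pos (g x)); lra).
  set (e1 := Rmin 1 (eps / (2*M))).
  assert (he1 : 0 < e1) by (apply Rmin_pos; [lra| apply Rdiv_lt_0_compat; lra]).
  assert (he1' : e1 <= 1) by apply Rmin_l.
  assert (he1'' : e1 * (2*M) <= eps).
  { assert (e1 <= eps/(2*M)) by apply Rmin_r.
    apply (Rmult_le_compat_r (2*M)) in H; [|lra]. unfold Rdiv in H.
    rewrite Rmult_assoc, Rinv_l, Rmult_1_r in H; lra. }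
  destruct (Hf x Dx e1 he1) as [d1 [hd1 H1]].
  destruct (Hg x Dx e1 he1) as [d2 [hd2 H2]].
  exists (Rmin d1 d2). split; [apply Rmin_pos; lra|]. intros y Dy hy.
  pose proof (Rmin_l d1 d2). pose proof (Rmin_r d1 d2).
  specialize (H1 y Dy ltac:(lra)). specialize (H2 y Dy ltac:(lra)).
  replace (f x * g x - f y * g y) with (f x * (g x - g y) + g y * (f x - f y)) by ring.
  pose proof (Rabs_triang (f x * (g x - g y)) (g y * (f x - f y))).
  rewrite !Rabs_mult in H3.
  assert (Rabs (g y) <= Rabs (g x) + 1).
  { replace (g y) with (g x - (g x - g y)) by ring.
    pose proof (Rabs_triang (g x) (- (g x - g y))). rewrite Rabs_Ropp in H4.
    unfold Rminus at 1. lra. }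
  pose proof (Rabs_pos (f x)). pose proof (Rabs_pos (g y)).
  pose proof (Rabs_pos (g x - g y)). pose proof (Rabs_pos (f x - f y)).
  assert (Rabs (f x) * Rabs (g x - g y) <= Rabs (f x) * e1) by (apply Rmult_le_compat_l; lra).
  assert (Rabs (g y) * Rabs (f x - f y) <= (Rabs (g x) + 1) * e1) by (apply Rmult_le_compat; lra).
  unfold M in he1''. nra.
Qed.

Lemma cts_comp {X} d D (P : R -> Prop) (h : R -> R) (f : X -> R) :
  rcts P h -> (forall x, D x -> P (f x)) -> cts d D f -> cts d D (fun x => h (f x)).
Proof. intros Hh HP Hf x Dx eps he.
  destruct (Hh (f x) (HP x Dx) eps he) as [d1 [hd1 H1]].
  destruct (Hf x Dx d1 hd1) as [d2 [hd2 H2]].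
  exists d2. split; [exact hd2|]. intros y Dy hy. apply H1; auto. Qed.

Lemma cts_lift {X Y} (dX : X -> X -> R) (DX : X -> Prop) (dY : Y -> Y -> R) (DY : Y -> Prop)
  (phi : X -> Y) (f : Y -> R) :
  (forall x, DX x -> DY (phi x)) -> (forall x y, dY (phi x) (phi y) <= dX x y) ->
  cts dY DY f -> cts dX DX (fun x => f (phi x)).
Proof. intros HD Hd Hf x Dx eps he.
  destruct (Hf (phi x) (HD x Dx) eps he) as [d1 [hd1 H1]].
  exists d1. split; [exact hd1|]. intros y Dy hy. apply H1; auto. specialize (Hd x y). lra. Qed.

Definition dR (x y : R) := Rabs (x - y).

Lemma cts_id D : cts dR D (fun x => x).
Proof. intros x _ eps he. exists eps. split; auto. Qed.

Lemma rcts_of_continue (P : R -> Prop) (h : R -> R) :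
  (forall y, P y -> continue_in h P y) -> rcts P h.
Proof. intros H y Py eps he.
  destruct (H y Py eps he) as [alp [ha Ha]].
  exists alp. split; auto. intros y' Py' hy'.
  destruct (Req_dec y y') as [e|ne].
  - subst. rewrite Rminus_diag, Rabs_R0. lra.
  - assert (hd : Rabs (y' - y) < alp) by (rewrite Rabs_minus_sym; exact hy').
    assert (Hc := Ha y' (conj (conj Py' ne) hd)). simpl in Hc. unfold Rdist in Hc.
    rewrite Rabs_minus_sym. exact Hc.
Qed.

Lemma rcts_exp : rcts (fun _ => True) exp.
Proof. apply rcts_of_continue. intros y _.
  assert (C : continuity_pt exp y) by (apply derivable_continuous_pt; apply derivable_pt_exp).
  intros eps he. destruct (C eps he) as [alp [ha Ha]]. exists alp. split; [exact ha|].
  intros x [[_ hx] hd]. apply Ha. split; [split; [exact I|exact hx]|exact hd]. Qed.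

Lemma rcts_ln : rcts (fun x => 0 < x) ln.
Proof. apply rcts_of_continue. intros y hy. apply ln_continue; auto. Qed.

Lemma rcts_sqrt : rcts (fun x => 0 < x) sqrt.
Proof. apply rcts_of_continue. intros y hy.
  pose proof (sqrt_continuity_pt y hy) as C.
  intros eps he. destruct (C eps he) as [alp [ha Ha]]. exists alp. split; [exact ha|].
  intros x [[_ hx] hd]. apply Ha. split; [split; [exact I|exact hx]|exact hd]. Qed.

Definition p1 (p : pt3) : R := fst (fst p).
Definition p2 (p : pt3) : R := snd (fst p).
Definition p3 (p : pt3) : R := snd p.

Lemma sqrt_ge_abs a b c : Rabs a <= sqrt (a^2 + b^2 + c^2).
Proof. rewrite <- sqrt_Rsqr_abs. apply sqrt_le_1_alt. unfold Rsqr.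
  pose proof (pow2_ge_0 b). pose proof (pow2_ge_0 c). simpl. lra. Qed.

Lemma sqrt_le_sum a b c : sqrt (a^2 + b^2 + c^2) <= Rabs a + Rabs b + Rabs c.
Proof. pose proof (Rabs_pos a). pose proof (Rabs_pos b). pose proof (Rabs_pos c).
  rewrite <- (sqrt_square (Rabs a + Rabs b + Rabs c)) by lra.
  apply sqrt_le_1_alt.
  assert (a^2 = Rabs a * Rabs a) by (rewrite <- Rabs_mult; simpl; rewrite Rmult_1_r; symmetry; apply Rabs_right; nra).
  assert (b^2 = Rabs b * Rabs b) by (rewrite <- Rabs_mult; simpl; rewrite Rmult_1_r; symmetry; apply Rabs_right; nra).
  assert (c^2 = Rabs c * Rabs c) by (rewrite <- Rabs_mult; simpl; rewrite Rmult_1_r; symmetry; apply Rabs_right; nra).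
  nra. Qed.

Lemma dist3_p1 p q : dR (p1 p) (p1 q) <= dist3 p q.
Proof. destruct p as [[x1 y1] z1], q as [[x2 y2] z2]. unfold dR, p1, dist3; cbn [fst snd]. apply sqrt_ge_abs. Qed.
Lemma dist3_p2 p q : dR (p2 p) (p2 q) <= dist3 p q.
Proof. destruct p as [[x1 y1] z1], q as [[x2 y2] z2]. unfold dR, p2, dist3; cbn [fst snd].
  replace ((x1 - x2) ^ 2 + (y1 - y2) ^ 2 + (z1 - z2) ^ 2) with ((y1 - y2) ^ 2 + (x1 - x2) ^ 2 + (z1 - z2) ^ 2) by ring.
  apply sqrt_ge_abs. Qed.
Lemma dist3_p3 p q : dR (p3 p) (p3 q) <= dist3 p q.
Proof. destruct p as [[x1 y1] z1], q as [[x2 y2] z2]. unfold dR, p3, dist3; cbn [fst snd].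
  replace ((x1 - x2) ^ 2 + (y1 - y2) ^ 2 + (z1 - z2) ^ 2) with ((z1 - z2) ^ 2 + (x1 - x2) ^ 2 + (y1 - y2) ^ 2) by ring.
  apply sqrt_ge_abs. Qed.

Lemma dist3_mk a b c a' b' c' : dist3 (a,b,c) (a',b',c') <= dR a a' + dR b b' + dR c c'.
Proof. unfold dist3, dR. apply sqrt_le_sum. Qed.

Lemma cts3 {X} d D (f1 f2 f3 : X -> R) : cts d D f1 -> cts d D f2 -> cts d D f3 ->
  forall x, D x -> forall eps, 0 < eps -> exists delta, 0 < delta /\
    forall y, D y -> d x y < delta -> dist3 (f1 x, f2 x, f3 x) (f1 y, f2 y, f3 y) < eps.
Proof. intros H1 H2 H3 x Dx eps he.
  destruct (H1 x Dx (eps/3) ltac:(lra)) as [d1 [hd1 K1]].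
  destruct (H2 x Dx (eps/3) ltac:(lra)) as [dsq [hd2 K2]].
  destruct (H3 x Dx (eps/3) ltac:(lra)) as [d3 [hd3 K3]].
  exists (Rmin d1 (Rmin dsq d3)). split.
  { apply Rmin_pos; [lra| apply Rmin_pos; lra]. }
  intros y Dy hy. pose proof (Rmin_l d1 (Rmin dsq d3)). pose proof (Rmin_r d1 (Rmin dsq d3)).
  pose proof (Rmin_l dsq d3). pose proof (Rmin_r dsq d3).
  specialize (K1 y Dy ltac:(lra)). specialize (K2 y Dy ltac:(lra)). specialize (K3 y Dy ltac:(lra)).
  pose proof (dist3_mk (f1 x) (f2 x) (f3 x) (f1 y) (f2 y) (f3 y)). unfold dR in *. lra.
Qed.

Lemma path_cont_of (f1 f2 f3 : R -> R) : cts dR I01 f1 -> cts dR I01 f2 -> cts dR I01 f3 ->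
  path_cont (fun t => (f1 t, f2 t, f3 t)).
Proof. intros H1 H2 H3 t Dt eps he. exact (cts3 dR I01 f1 f2 f3 H1 H2 H3 t Dt eps he). Qed.

Definition dsq (a b : R * R) := sqrt ((fst a - fst b)^2 + (snd a - snd b)^2).
Definition Dsq (a : R * R) := I01 (fst a) /\ I01 (snd a).

Lemma square_cont_of (f1 f2 f3 : R * R -> R) : cts dsq Dsq f1 -> cts dsq Dsq f2 -> cts dsq Dsq f3 ->
  square_cont (fun s t => (f1 (s,t), f2 (s,t), f3 (s,t))).
Proof. intros H1 H2 H3 s t Ds Dt eps he.
  destruct (cts3 dsq Dsq f1 f2 f3 H1 H2 H3 (s,t) (conj Ds Dt) eps he) as [del [hd K]].
  exists del. split; [exact hd|]. intros s' t' Ds' Dt' hst. apply (K (s',t')); [split; auto | exact hst].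
Qed.

Lemma dsq_fst a b : dR (fst a) (fst b) <= dsq a b.
Proof. unfold dR, dsq. rewrite <- sqrt_Rsqr_abs. apply sqrt_le_1_alt. unfold Rsqr.
  pose proof (pow2_ge_0 (snd a - snd b)). simpl. lra. Qed.
Lemma dsq_snd a b : dR (snd a) (snd b) <= dsq a b.
Proof. unfold dR, dsq. rewrite <- sqrt_Rsqr_abs. apply sqrt_le_1_alt. unfold Rsqr.
  pose proof (pow2_ge_0 (fst a - fst b)). simpl. lra. Qed.

Lemma path_comp (g : R -> pt3) (pi : pt3 -> R) :
  (forall p q, dR (pi p) (pi q) <= dist3 p q) -> path_cont g -> cts dR I01 (fun t => pi (g t)).
Proof. intros Hp Hg t Dt eps he. destruct (Hg t Dt eps he) as [del [hd K]].
  exists del. split; [exact hd|]. intros t' Dt' ht. specialize (K t' Dt' ht).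
  specialize (Hp (g t) (g t')). unfold dR in Hp. lra. Qed.

Lemma Kset_rot I1 I2 I3 a b c : Kset I1 I2 I3 a b c -> Kset I2 I3 I1 b c a.
Proof. intros [ha [hb [hc [t0 [t1 t2]]]]]. repeat split; auto. Qed.

Lemma conv_K I1 I2 I3 a b c a' b' c' t : 0 <= I1 -> 0 <= I2 -> 0 <= I3 ->
  Kset I1 I2 I3 a b c -> Kset I1 I2 I3 a' b' c' -> 0 <= t <= 1 ->
  Kset I1 I2 I3 ((1-t)*a + t*a') ((1-t)*b + t*b') ((1-t)*c + t*c').
Proof. intros h1 h2 h3 K K' ht.
  pose proof K as [ha [hb [hc _]]]. pose proof K' as [ha' [hb' [hc' _]]].
  split; [nra|]. split; [nra|]. split; [nra|].
  split; [apply conv_T0; auto|].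
  split.
  - apply (conv_T0 I2 I3 I1 b c a b' c' a' t); auto; apply Kset_rot; auto.
  - apply (conv_T0 I3 I1 I2 c a b c' a' b' t); auto; do 2 apply Kset_rot; auto.
Qed.

Lemma edge_inv I a b : 0 <= I -> 0 < a -> 0 < b -> edge_len I (/a) (/b) = Nf I a b / (a*b).
Proof. intros hI ha hb. unfold edge_len, Nf.
  replace ((/ a) ^ 2 + (/ b) ^ 2 + 2 * I * / a * / b) with (Qf I a b * (/(a*b) * /(a*b)))
    by (unfold Qf; field; lra).
  rewrite sqrt_mult_alt by (apply Qf_nonneg; lra).
  rewrite sqrt_square. reflexivity.
  left. apply Rinv_0_lt_compat. nra.
Qed.

Lemma ineq_conv a b c X Y Z : 0 < a -> 0 < b -> 0 < c ->
  (X/(a*b) < Y/(b*c) + Z/(c*a) <-> c*X < a*Y + b*Z).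
Proof. intros ha hb hc.
  assert (habc : 0 < a*b*c) by (repeat apply Rmult_lt_0_compat; lra).
  assert (e : Y/(b*c) + Z/(c*a) - X/(a*b) = (a*Y + b*Z - c*X) / (a*b*c)) by (field; lra).
  split; intro H.
  - assert (0 < (a*Y + b*Z - c*X) / (a*b*c)) by lra.
    assert (0 < a*Y + b*Z - c*X).
    { destruct (Rle_or_lt (a*Y + b*Z - c*X) 0); auto.
      assert ((a*Y + b*Z - c*X) / (a*b*c) <= 0).
      { unfold Rdiv. assert (0 < / (a*b*c)) by (apply Rinv_0_lt_compat; lra). nra. }
      lra. }
    lra.
  - assert (0 < (a*Y + b*Z - c*X) / (a*b*c)) by (apply Rdiv_lt_0_compat; lra). lra.
Qed.

Lemma R_E_K I1 I2 I3 a b c : 0 <= I1 -> 0 <= I2 -> 0 <= I3 -> 0 < a -> 0 < b -> 0 < c ->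
  (R_E I1 I2 I3 (/a, /b, /c) <-> Kset I1 I2 I3 a b c).
Proof. intros h1 h2 h3 ha hb hc. unfold R_E. cbv beta iota zeta.
  rewrite (edge_inv I1 a b), (edge_inv I2 b c), (edge_inv I3 c a) by lra.
  rewrite (ineq_conv a b c) by lra.
  rewrite (ineq_conv b c a) by lra.
  rewrite (ineq_conv c a b) by lra.
  unfold Kset, T0.
  assert (0 < /a) by (apply Rinv_0_lt_compat; lra).
  assert (0 < /b) by (apply Rinv_0_lt_compat; lra).
  assert (0 < /c) by (apply Rinv_0_lt_compat; lra).
  split; intros [_ [_ [_ [x [y z]]]]]; repeat split; auto.
Qed.

Definition kp (pi : pt3 -> R) (u : pt3) := exp (- (pi u)).

Lemma U_E_K I1 I2 I3 u : 0 <= I1 -> 0 <= I2 -> 0 <= I3 ->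
  (U_E I1 I2 I3 u <-> Kset I1 I2 I3 (kp p1 u) (kp p2 u) (kp p3 u)).
Proof. intros h1 h2 h3. destruct u as [[x y] z]. unfold U_E, kp, p1, p2, p3. cbn [fst snd].
  rewrite <- (R_E_K I1 I2 I3); try apply exp_pos; auto.
  rewrite !exp_Ropp, !Rinv_inv. reflexivity.
Qed.

Definition Ff (pi : pt3 -> R) (P Q : pt3) (s : R) :=
  - ln ((1-s) * exp (-(pi P)) + s * exp (-(pi Q))).

Lemma Ff_exp pi P Q s : 0 <= s <= 1 ->
  exp (- Ff pi P Q s) = (1-s) * exp (-(pi P)) + s * exp (-(pi Q)).
Proof. intros hs. unfold Ff. rewrite Ropp_involutive. apply exp_ln.
  pose proof (exp_pos (-(pi P))). pose proof (exp_pos (-(pi Q))). nra. Qed.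

Lemma Ff_0 pi P Q : Ff pi P Q 0 = pi P.
Proof. unfold Ff. replace ((1 - 0) * exp (- pi P) + 0 * exp (- pi Q)) with (exp (- pi P)) by ring.
  rewrite ln_exp. ring. Qed.
Lemma Ff_1 pi P Q : Ff pi P Q 1 = pi Q.
Proof. unfold Ff. replace ((1 - 1) * exp (- pi P) + 1 * exp (- pi Q)) with (exp (- pi Q)) by ring.
  rewrite ln_exp. ring. Qed.
Lemma Ff_same pi P s : Ff pi P P s = pi P.
Proof. unfold Ff. replace ((1 - s) * exp (- pi P) + s * exp (- pi P)) with (exp (- pi P)) by ring.
  rewrite ln_exp. ring. Qed.

Lemma eta3 (u : pt3) : (p1 u, p2 u, p3 u) = u.
Proof. destruct u as [[x y] z]. reflexivity. Qed.

Lemma Ff_mem I1 I2 I3 P Q s : 0 <= I1 -> 0 <= I2 -> 0 <= I3 ->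
  U_E I1 I2 I3 P -> U_E I1 I2 I3 Q -> I01 s ->
  U_E I1 I2 I3 (Ff p1 P Q s, Ff p2 P Q s, Ff p3 P Q s).
Proof. intros h1 h2 h3 HP HQ hs. unfold I01 in hs.
  apply U_E_K; auto. apply U_E_K in HP; auto. apply U_E_K in HQ; auto.
  assert (E1 : kp p1 (Ff p1 P Q s, Ff p2 P Q s, Ff p3 P Q s) = (1-s)*kp p1 P + s*kp p1 Q)
    by (unfold kp; apply (Ff_exp p1 P Q s); lra).
  assert (E2 : kp p2 (Ff p1 P Q s, Ff p2 P Q s, Ff p3 P Q s) = (1-s)*kp p2 P + s*kp p2 Q)
    by (unfold kp; apply (Ff_exp p2 P Q s); lra).
  assert (E3 : kp p3 (Ff p1 P Q s, Ff p2 P Q s, Ff p3 P Q s) = (1-s)*kp p3 P + s*kp p3 Q)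
    by (unfold kp; apply (Ff_exp p3 P Q s); lra).
  rewrite E1, E2, E3. apply conv_K; auto.
Qed.

Lemma cts_Ff {X} (d : X -> X -> R) D (sg al be : X -> R) :
  cts d D sg -> (forall x, D x -> 0 <= sg x <= 1) -> cts d D al -> cts d D be ->
  cts d D (fun x => - ln ((1 - sg x) * exp (- al x) + sg x * exp (- be x))).
Proof. intros Hs Hs01 Ha Hb.
  apply (cts_opp d D (fun x => ln ((1 - sg x) * exp (- al x) + sg x * exp (- be x)))).
  apply (cts_comp d D (fun y => 0 < y) ln (fun x => (1 - sg x) * exp (- al x) + sg x * exp (- be x))).
  - exact rcts_ln.
  - intros x Dx. specialize (Hs01 x Dx). pose proof (exp_pos (- al x)). pose proof (exp_pos (- be x)). nra.
  - apply (cts_plus d D (fun x => (1 - sg x) * exp (- al x)) (fun x => sg x * exp (- be x))).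
    + apply (cts_mult d D (fun x => 1 - sg x) (fun x => exp (- al x))).
      * apply (cts_plus d D (fun _ => 1) (fun x => - sg x)); [apply cts_const | apply cts_opp; exact Hs].
      * apply (cts_comp d D (fun _ => True) exp (fun x => - al x)); [exact rcts_exp | auto | apply cts_opp; exact Ha].
    + apply (cts_mult d D sg (fun x => exp (- be x))); [exact Hs|].
      apply (cts_comp d D (fun _ => True) exp (fun x => - be x)); [exact rcts_exp | auto | apply cts_opp; exact Hb].
Qed.

Lemma path_Ff (p q : pt3) : path_cont (fun t => (Ff p1 p q t, Ff p2 p q t, Ff p3 p q t)).
Proof. unfold Ff. apply path_cont_of;
  apply (cts_Ff dR I01 (fun t => t)); try apply cts_id; try apply cts_const; auto.
Qed.

Lemma sq_Ff (g : R -> pt3) : path_cont g ->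
  square_cont (fun s t => (Ff p1 (g (snd (s,t))) (g 0) (fst (s,t)),
                           Ff p2 (g (snd (s,t))) (g 0) (fst (s,t)),
                           Ff p3 (g (snd (s,t))) (g 0) (fst (s,t)))).
Proof. intros Hg.
  assert (Hfst : cts dsq Dsq (fun st => fst st)).
  { apply (cts_lift dsq Dsq dR I01 (fun st => fst st) (fun x => x)).
    - intros x [h _]; exact h.
    - intros; apply dsq_fst.
    - apply cts_id. }
  assert (Hpi : forall pi : pt3 -> R, (forall p q, dR (pi p) (pi q) <= dist3 p q) ->
     cts dsq Dsq (fun st => pi (g (snd st)))).
  { intros pi Hp. apply (cts_lift dsq Dsq dR I01 (fun st => snd st) (fun t => pi (g t))).
    - intros x [_ h]; exact h.
    - intros; apply dsq_snd.
    - apply path_comp; auto. }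
  apply (square_cont_of (fun st => Ff p1 (g (snd st)) (g 0) (fst st))
                        (fun st => Ff p2 (g (snd st)) (g 0) (fst st))
                        (fun st => Ff p3 (g (snd st)) (g 0) (fst st))); unfold Ff;
  (apply (cts_Ff dsq Dsq (fun st => fst st)); [exact Hfst | intros x [h _]; exact h | | apply cts_const]).
  - apply Hpi. apply dist3_p1.
  - apply Hpi. apply dist3_p2.
  - apply Hpi. apply dist3_p3.
Qed.

Lemma cts_ext {X} (d : X -> X -> R) D (f g : X -> R) :
  (forall x, f x = g x) -> cts d D f -> cts d D g.
Proof. intros E Hf x Dx eps he. destruct (Hf x Dx eps he) as [del [hd K]].
  exists del. split; [exact hd|]. intros y Dy hy. rewrite <- !E. auto. Qed.

Definition Lf (I : R) (pi pi' : pt3 -> R) (u : pt3) := edge_len I (exp (pi u)) (exp (pi' u)).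

Definition T3 (u : pt3) := True.

Lemma cts_exp_pi (pi : pt3 -> R) : (forall p q, dR (pi p) (pi q) <= dist3 p q) ->
  cts dist3 T3 (fun u => exp (pi u)).
Proof. intros Hp. apply (cts_comp dist3 T3 (fun _ => True) exp (fun u => pi u)); [exact rcts_exp| auto|].
  apply (cts_lift dist3 T3 dR (fun _ => True) pi (fun x => x)); auto. apply cts_id. Qed.

Lemma cts_Lf I pi pi' : 0 <= I -> (forall p q, dR (pi p) (pi q) <= dist3 p q) ->
  (forall p q, dR (pi' p) (pi' q) <= dist3 p q) -> cts dist3 T3 (Lf I pi pi').
Proof. intros hI H1 H2. unfold Lf, edge_len.
  pose proof (cts_exp_pi pi H1) as C1. pose proof (cts_exp_pi pi' H2) as C2.
  apply (cts_comp dist3 T3 (fun y => 0 < y) sqrt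
     (fun u => exp (pi u) ^ 2 + exp (pi' u) ^ 2 + 2 * I * exp (pi u) * exp (pi' u))).
  - exact rcts_sqrt.
  - intros u _. pose proof (exp_pos (pi u)). pose proof (exp_pos (pi' u)).
    assert (0 <= I * exp (pi u) * exp (pi' u)) by (repeat apply Rmult_le_pos; lra). nra.
  - apply (cts_ext dist3 T3 (fun u => (exp (pi u) * exp (pi u) + exp (pi' u) * exp (pi' u))
        + ((fun _ => 2*I) u * exp (pi u)) * exp (pi' u))).
    { intros u. simpl. ring. }
    apply (cts_plus dist3 T3 (fun u => exp (pi u) * exp (pi u) + exp (pi' u) * exp (pi' u))
                             (fun u => ((fun _ => 2*I) u * exp (pi u)) * exp (pi' u))).
    + apply (cts_plus dist3 T3 (fun u => exp (pi u) * exp (pi u)) (fun u => exp (pi' u) * exp (pi' u)));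
      apply cts_mult; auto.
    + apply (cts_mult dist3 T3 (fun u => (fun _ => 2*I) u * exp (pi u)) (fun u => exp (pi' u))); auto.
      apply cts_mult; auto. apply cts_const.
Qed.

Lemma U_E_L I1 I2 I3 u : U_E I1 I2 I3 u <->
  (Lf I1 p1 p2 u < Lf I2 p2 p3 u + Lf I3 p3 p1 u /\
   Lf I2 p2 p3 u < Lf I3 p3 p1 u + Lf I1 p1 p2 u /\
   Lf I3 p3 p1 u < Lf I1 p1 p2 u + Lf I2 p2 p3 u).
Proof. destruct u as [[x y] z]. unfold U_E, R_E, Lf, p1, p2, p3. cbn [fst snd]. cbv beta iota zeta.
  pose proof (exp_pos x). pose proof (exp_pos y). pose proof (exp_pos z).
  split; [intros [_ [_ [_ HH]]]; exact HH | intros HH; repeat split; try apply HH; auto].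
Qed.

Lemma open_U I1 I2 I3 : 0 <= I1 -> 0 <= I2 -> 0 <= I3 -> open3 (U_E I1 I2 I3).
Proof. intros h1 h2 h3 p Hp. apply U_E_L in Hp.
  pose proof (cts_Lf I1 p1 p2 h1 dist3_p1 dist3_p2) as C1.
  pose proof (cts_Lf I2 p2 p3 h2 dist3_p2 dist3_p3) as C2.
  pose proof (cts_Lf I3 p3 p1 h3 dist3_p3 dist3_p1) as C3.
  set (a := Lf I1 p1 p2 p) in *. set (b := Lf I2 p2 p3 p) in *. set (c := Lf I3 p3 p1 p) in *.
  set (m := Rmin (Rmin (b + c - a) (c + a - b)) (a + b - c)).
  assert (hm : 0 < m) by (unfold m; repeat apply Rmin_pos; lra).
  assert (m1 : m <= b + c - a) by (unfold m; pose proof (Rmin_l (Rmin (b + c - a) (c + a - b)) (a + b - c)); pose proof (Rmin_l (b + c - a) (c + a - b)); lra).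
  assert (m2 : m <= c + a - b) by (unfold m; pose proof (Rmin_l (Rmin (b + c - a) (c + a - b)) (a + b - c)); pose proof (Rmin_r (b + c - a) (c + a - b)); lra).
  assert (m3 : m <= a + b - c) by (unfold m; pose proof (Rmin_r (Rmin (b + c - a) (c + a - b)) (a + b - c)); lra).
  destruct (C1 p I (m/3) ltac:(lra)) as [d1 [hd1 K1]].
  destruct (C2 p I (m/3) ltac:(lra)) as [d2' [hd2 K2]].
  destruct (C3 p I (m/3) ltac:(lra)) as [d3 [hd3 K3]].
  exists (Rmin d1 (Rmin d2' d3)). split.
  { apply Rmin_pos; [lra| apply Rmin_pos; lra]. }
  intros q hq. pose proof (Rmin_l d1 (Rmin d2' d3)). pose proof (Rmin_r d1 (Rmin d2' d3)).
  pose proof (Rmin_l d2' d3). pose proof (Rmin_r d2' d3).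
  specialize (K1 q I ltac:(lra)). specialize (K2 q I ltac:(lra)). specialize (K3 q I ltac:(lra)).
  apply Rabs_def2 in K1. apply Rabs_def2 in K2. apply Rabs_def2 in K3.
  apply U_E_L. fold a b c in K1, K2, K3. lra.
Qed.

Lemma conn_of_path (U : pt3 -> Prop) : path_connected3 U -> connected3 U.
Proof. intros HP [A [B [oA [oB [cov [[p [Up Ap]] [[q [Uq Bq]] disj]]]]]]].
  destruct (HP p q Up Uq) as [g [gc [gU [g0 g1]]]].
  set (E := fun t => 0 <= t <= 1 /\ forall t', 0 <= t' <= t -> A (g t')).
  assert (E0 : E 0).
  { split; [lra|]. intros t' ht'. replace t' with 0 by lra. rewrite g0; auto. }
  assert (Eb : bound E). { exists 1. intros x [hx _]. lra. }
  destruct (completeness E Eb (ex_intro _ 0 E0)) as [tau [tub tlub]].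
  assert (ht0 : 0 <= tau) by (apply tub; auto).
  assert (ht1 : tau <= 1) by (apply tlub; intros x [hx _]; lra).
  assert (key : forall t', 0 <= t' < tau -> A (g t')).
  { intros t' ht'. destruct (classic (exists e, E e /\ t' < e)) as [[e [[he1 he2] he3]]|nE].
    - apply he2. lra.
    - exfalso. assert (is_upper_bound E t').
      { intros x Ex. destruct (Rle_or_lt x t'); auto. exfalso. apply nE. exists x. auto. }
      pose proof (tlub t' H). lra. }
  assert (Ut : U (g tau)) by (apply gU; split; lra).
  destruct (cov _ Ut) as [At|Bt].
  - destruct (oA _ At) as [eps [he Heps]].
    destruct (gc tau (conj ht0 ht1) eps he) as [del [hd Hd]].
    destruct (Rlt_or_le tau 1) as [hlt|hge].
    + set (tau' := Rmin 1 (tau + del/2)).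
      assert (Et' : E tau').
      { split. { unfold tau'. pose proof (Rmin_l 1 (tau + del/2)). split; [|lra].
          apply Rmin_glb; lra. }
        intros t' ht'. destruct (Rlt_or_le t' tau) as [h|h].
        - apply key; lra.
        - apply Heps. apply Hd.
          + unfold tau' in ht'. pose proof (Rmin_l 1 (tau + del/2)). split; lra.
          + unfold tau' in ht'. pose proof (Rmin_r 1 (tau + del/2)).
            rewrite Rabs_left1 by lra. lra. }
      pose proof (tub _ Et'). unfold tau' in H.
      assert (tau < Rmin 1 (tau + del/2)) by (apply Rmin_glb_lt; lra). lra.
    + assert (tau = 1) by lra. subst tau. rewrite g1 in At. exact (disj q Uq At Bq).
  - destruct (oB _ Bt) as [eps [he Heps]].
    destruct (gc tau (conj ht0 ht1) eps he) as [del [hd Hd]].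
    destruct (Rle_or_lt tau 0) as [hle|hgt].
    + assert (tau = 0) by lra. subst tau. rewrite g0 in Bt. exact (disj p Up Ap Bt).
    + set (t' := Rmax 0 (tau - del/2)).
      assert (h1 : 0 <= t') by apply Rmax_l.
      assert (h2 : t' < tau) by (apply Rmax_lub_lt; lra).
      assert (h3 : tau - del/2 <= t') by apply Rmax_r.
      apply (disj (g t')).
      * apply gU. split; lra.
      * apply key; lra.
      * apply Heps. apply Hd. split; lra. rewrite Rabs_right by lra. lra.
Qed.

Lemma pc_U I1 I2 I3 : 0 <= I1 -> 0 <= I2 -> 0 <= I3 -> path_connected3 (U_E I1 I2 I3).
Proof. intros h1 h2 h3 p q Hp Hq.
  exists (fun t => (Ff p1 p q t, Ff p2 p q t, Ff p3 p q t)). split; [apply path_Ff|].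
  split; [intros t ht; apply Ff_mem; auto|].
  split.
  - rewrite !Ff_0. apply eta3.
  - rewrite !Ff_1. apply eta3.
Qed.

Theorem corollary2p2 (Iij Ijk Iki : R)
  (hij : 0 <= Iij) (hjk : 0 <= Ijk) (hki : 0 <= Iki) :
  connected3 (U_E Iij Ijk Iki) /\
  simply_connected3 (U_E Iij Ijk Iki) /\
  open3 (U_E Iij Ijk Iki).
Proof.
  split; [apply conn_of_path; apply pc_U; auto|].
  split; [|apply open_U; auto].
  split; [apply pc_U; auto|].
  intros g gc gU gl.
  exists (fun s t => (Ff p1 (g (snd (s,t))) (g 0) (fst (s,t)),
                      Ff p2 (g (snd (s,t))) (g 0) (fst (s,t)),
                      Ff p3 (g (snd (s,t))) (g 0) (fst (s,t)))).
  split; [apply sq_Ff; auto|]. cbn [fst snd].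
  split; [intros s t hs ht; apply Ff_mem; auto; apply gU; unfold I01; lra|].
  split; [intros t ht; rewrite !Ff_0; apply eta3|].
  split; [intros t ht; rewrite !Ff_1; apply eta3|].
  intros s hs. split.
  - rewrite !Ff_same. apply eta3.
  - rewrite <- gl. rewrite !Ff_same. apply eta3.
Qed.
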